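(* In the setting below, let $e,f\in G_0$ with $T_e\cap S_f\neq\emptyset$, and let $n_{e,f}=|T_e\cap S_f|=|\{g\in G: r(g)=e,\ d(g)=f\}|$. Then $$B_{e,f}=\bigoplus_{g\in G_e,\ l\in T_e\cap S_f}E_g\delta_g\#v_l\ \cong\ M_{n_{e,f}}(E_e)$$ as unital $K$-algebras, where $B_{e,f}$ has identity $1_e\delta_e\#\sum_{l\in T_e\cap S_f}v_l$.
   Context: Groupoid conventions. A groupoid is a small category with all morphisms invertible, regarded as the set $G$ of morphisms. For $g\in G$ we have $d(g)=g^{-1}g$ and $r(g)=gg^{-1}$. The product $gh$ is defined iff $d(g)=r(h)$, and then $d(gh)=d(h)$, $r(gh)=r(g)$. $G^2=\{(g,h):d(g)=r(h)\}$, and $G_0$ is the set of identities. For $e\in G_0$: - $G_e=\{g: d(g)=r(g)=e\}$; - $S_e=\{g\in G: d(g)=e\}$; - $T_e=\{g\in G: r(g)=e\}$. Actions. An action of $G$ on a ring $R$ is a pair $\beta=(\{E_g\},\{\beta_g\})$ where each $E_g=E_{r(g)}$ is an ideal of $R$, each $\beta_g:E_{g^{-1}}\to E_g$ is a ring isomorphism, $\beta_e=\mathrm{id}$ for $e\in G_0$, and $\beta_g\beta_h=\beta_{gh}$ on $E_{h^{-1}}$ for $(g,h)\in G^2$. Skew groupoid ring. $R\star_\beta G=\bigoplus_{g\in G}E_g\delta_g$ (the $\delta_g$ are formal symbols), with $(x\delta_g)(y\delta_h)=x\beta_g(y)\delta_{gh}$ if $(g,h)\in G^2$ and $0$ otherwise,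 for $x\in E_g$, $y\in E_h$. $KG^*$. The free $K$-module with basis $\{v_g\}_{g\in G}$, with $v_gv_h=\delta_{g,h}v_g$ and identity $\sum_g v_g$. Weak smash product. For a unital $G$-graded algebra $A=\bigoplus A_g$ (with $A_gA_h\subseteq A_{gh}$ if $(g,h)\in G^2$, and $0$ otherwise), $KG^*$ acts by $v_h\cdot a=a_h$ (the $h$-component). $A\#KG^*=A\otimes_K KG^*$ with $(a\#v_g)(b\#v_h)=a(v_{gh^{-1}}\cdot b)\#v_h$ if $d(g)=d(h)$, and $0$ otherwise. Setting. $K$ is a commutative unital ring and $G$ is a finite groupoid. $R$ is a not necessarily unital $K$-algebra with an action $\beta$ of $G$ (by $K$-linear maps) such that each $E_e$, $e\in G_0$, has an identity element $1_e$; put $1_g:=1_{r(g)}$, the identity of $E_g$. Then $R\star_\beta G$ is a unital $K$-algebra with identity $\sum_{e\in G_0}1_e\delta_e$. It is $G$-graded with $g$-component $E_g\delta_g$, so that $v_k\cdot(a_g\delta_g)=\delta_{k,g}a_g\delta_g$. Let $B=(R\star_\beta G)\#KG^*=\bigoplus_{g,h\in G}E_g\delta_g\#v_h$. $M_n(X)$ denotes the $n\times n$ matrix algebra over $X$. *)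

(* Defs.v *)
From HB Require Import structures.
From mathcomp Require Import all_boot all_order all_algebra.
Set Implicit Arguments. Unset Strict Implicit. Unset Printing Implicit Defensive.
Import GRing.Theory.
Local Open Scope ring_scope.

(* A finite groupoid, regarded as its (finite) set G of morphisms, with
   source d, range r, inverse inv and composition mul (mul g h is only
   meaningful when d g = r h).  The identities G_0 are the e with d e = e. *)
Record groupoid (G : finType) (d r inv : G -> G) (mul : G -> G -> G) : Prop := {
  gd_dd : forall g, d (d g) = d g;
  gd_rd : forall g, r (d g) = d g;
  gd_dr : forall g, d (r g) = r g;
  gd_rr : forall g, r (r g) = r g;
  gd_dmul : forall g h, d g = r h -> d (mul g h) = d h;
  gd_rmul : forall g h, d g = r h -> r (mul g h) = r g;
  gd_assoc : forall g h k, d g = r h -> d h = r k ->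
               mul (mul g h) k = mul g (mul h k);
  gd_lid : forall g, mul (r g) g = g;
  gd_rid : forall g, mul g (d g) = g;
  gd_dinv : forall g, d (inv g) = r g;
  gd_rinv : forall g, r (inv g) = d g;
  gd_invl : forall g, mul (inv g) g = d g;
  gd_invr : forall g, mul g (inv g) = r g }.

Definition is_unit_obj (G : finType) (d : G -> G) (e : G) : Prop := d e = e.

Record kalgebra (K : comPzRingType) (R : lmodType K) (Rmul : R -> R -> R) : Prop := {
  ka_assoc : forall x y z, Rmul (Rmul x y) z = Rmul x (Rmul y z);
  ka_mulDl : forall x y z, Rmul (x + y) z = Rmul x z + Rmul y z;
  ka_mulDr : forall x y z, Rmul x (y + z) = Rmul x y + Rmul x z;
  ka_scalel : forall (c : K) x y, Rmul (c *: x) y = c *: Rmul x y;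
  ka_scaler : forall (c : K) x y, Rmul x (c *: y) = c *: Rmul x y }.

Record ideal (K : comPzRingType) (R : lmodType K) (Rmul : R -> R -> R)
    (I : R -> Prop) : Prop := {
  id_0 : I 0;
  id_sub : forall x y, I x -> I y -> I (x - y);
  id_scale : forall (c : K) x, I x -> I (c *: x);
  id_mull : forall x y, I y -> I (Rmul x y);
  id_mulr : forall x y, I x -> I (Rmul x y) }.

Record action (K : comPzRingType) (R : lmodType K) (Rmul : R -> R -> R)
    (G : finType) (d r inv : G -> G) (mul : G -> G -> G)
    (E : G -> R -> Prop) (beta : G -> R -> R) (one : G -> R) : Prop := {
  ac_Er : forall g, E g = E (r g);
  ac_ideal : forall g, ideal Rmul (E g);
  ac_maps : forall g x, E (inv g) x -> E g (beta g x);
  ac_inj : forall g x y, E (inv g) x -> E (inv g) y -> beta g x = beta g y -> x = y;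
  ac_surj : forall g y, E g y -> exists2 x, E (inv g) x & beta g x = y;
  ac_add : forall g x y, E (inv g) x -> E (inv g) y ->
             beta g (x + y) = beta g x + beta g y;
  ac_scale : forall g (c : K) x, E (inv g) x -> beta g (c *: x) = c *: beta g x;
  ac_mul : forall g x y, E (inv g) x -> E (inv g) y ->
             beta g (Rmul x y) = Rmul (beta g x) (beta g y);
  ac_id : forall e x, is_unit_obj d e -> E e x -> beta e x = x;
  ac_comp : forall g h x, d g = r h -> E (inv h) x ->
             beta g (beta h x) = beta (mul g h) x;
  ac_one_in : forall e, is_unit_obj d e -> E e (one e);
  ac_one_l : forall e x, is_unit_obj d e -> E e x -> Rmul (one e) x = x;
  ac_one_r : forall e x, is_unit_obj d e -> E e x -> Rmul x (one e) = x }.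

(* Elements of B = (R *_beta G) # KG^* are written as
   sum_{g,l} x(g,l) delta_g # v_l, with x(g,l) in E_g. *)
Definition Belt (K : comPzRingType) (R : lmodType K) (G : finType) :=
  {ffun G * G -> R}.

(* Multiplication in B:
   (a delta_g # v_k)(b delta_h # v_l) = a beta_g(b) delta_{gh} # v_l
   if d k = d l, h = k l^{-1} and d g = r h, and 0 otherwise. *)
Definition Bmul (K : comPzRingType) (R : lmodType K) (Rmul : R -> R -> R)
    (G : finType) (d r inv : G -> G) (mul : G -> G -> G) (beta : G -> R -> R)
    (x y : {ffun G * G -> R}) : {ffun G * G -> R} :=
  [ffun p : G * G =>
     \sum_(g : G) \sum_(h : G) \sum_(k : G)
       (if [&& d k == d p.2, h == mul k (inv p.2), d g == r h & mul g h == p.1]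
        then Rmul (x (g, k)) (beta g (y (h, p.2))) else 0)].

(* x lies in B_{e,f} = (+)_{g in G_e, l in T_e cap S_f} E_g delta_g # v_l. *)
Definition inBef (K : comPzRingType) (R : lmodType K)
    (G : finType) (d r : G -> G) (E : G -> R -> Prop) (e f : G)
    (x : {ffun G * G -> R}) : Prop :=
  forall g l, E g (x (g, l)) /\
    (x (g, l) <> 0 -> [/\ d g = e, r g = e, r l = e & d l = f]).

Definition Bone (K : comPzRingType) (R : lmodType K)
    (G : finType) (d r : G -> G) (one : G -> R) (e f : G) : {ffun G * G -> R} :=
  [ffun p : G * G => if [&& p.1 == e, r p.2 == e & d p.2 == f] then one e else 0].

Definition nef (G : finType) (d r : G -> G) (e f : G) : nat :=
  #|[set l : G | (r l == e) && (d l == f)]|.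

Definition inMat (K : comPzRingType) (R : lmodType K) (I : R -> Prop) (n : nat)
    (A : {ffun 'I_n * 'I_n -> R}) : Prop := forall i j, I (A (i, j)).

Definition Mmul (K : comPzRingType) (R : lmodType K) (Rmul : R -> R -> R) (n : nat)
    (A B : {ffun 'I_n * 'I_n -> R}) : {ffun 'I_n * 'I_n -> R} :=
  [ffun p : 'I_n * 'I_n => \sum_(k < n) Rmul (A (p.1, k)) (B (k, p.2))].

Definition Mone (K : comPzRingType) (R : lmodType K) (n : nat) (u : R)
    : {ffun 'I_n * 'I_n -> R} :=
  [ffun p : 'I_n * 'I_n => if p.1 == p.2 then u else 0].

(* Main.v *)
Require Import Defs.
From HB Require Import structures.
From mathcomp Require Import all_boot all_order all_algebra.
Import GRing.Theory.
Local Open Scope ring_scope.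

Section Prop36.
Variables (K : comPzRingType) (R : lmodType K) (Rmul : R -> R -> R)
  (G : finType) (d r inv : G -> G) (mul : G -> G -> G)
  (E : G -> R -> Prop) (beta : G -> R -> R) (one : G -> R).
Hypotheses (HR : kalgebra Rmul) (HG : groupoid d r inv mul)
  (Hact : action Rmul d r inv mul E beta one).

Lemma massoc g h k : d g = r h -> d h = r k -> mul (mul g h) k = mul g (mul h k).
Proof. exact: (gd_assoc HG). Qed.

Lemma dinv g : d (inv g) = r g. Proof. exact: (gd_dinv HG). Qed.
Lemma rinv g : r (inv g) = d g. Proof. exact: (gd_rinv HG). Qed.
Lemma dmul g h : d g = r h -> d (mul g h) = d h. Proof. exact: (gd_dmul HG). Qed.
Lemma rmul g h : d g = r h -> r (mul g h) = r g. Proof. exact: (gd_rmul HG). Qed.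

Lemma rcanc a a' b : d a = r b -> d a' = r b -> mul a b = mul a' b -> a = a'.
Proof.
move=> Ha Ha' Heq.
have Hb : d b = r (inv b) by rewrite rinv.
rewrite -(gd_rid HG a) -(gd_rid HG a') Ha Ha' -(gd_invr HG b).
by rewrite -!massoc // Heq.
Qed.

Lemma canc1 a b c : d a = d b -> d b = r c ->
  mul (mul a (inv b)) (mul b c) = mul a c.
Proof.
move=> Hab Hc.
have H1 : mul (inv b) (mul b c) = c.
  by rewrite -massoc ?dinv // (gd_invl HG) Hc (gd_lid HG).
rewrite massoc ?H1 // ?rinv // dinv rmul //.
Qed.

Lemma canc2 a b : d a = d b -> mul (mul a (inv b)) b = a.
Proof.
move=> Hab; rewrite massoc ?rinv ?dinv // (gd_invl HG) -Hab (gd_rid HG) //.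
Qed.

Lemma canc3 g l : d g = r l -> mul (mul g l) (inv l) = g.
Proof.
move=> H; rewrite massoc ?rinv // (gd_invr HG) -H (gd_rid HG) //.
Qed.

Lemma Rmul0l y : Rmul 0 y = 0.
Proof.
have := ka_mulDl HR 0 0 y; rewrite addr0 => /eqP.
by rewrite -subr_eq subrr eq_sym => /eqP.
Qed.

Lemma Rmul0r y : Rmul y 0 = 0.
Proof.
have := ka_mulDr HR y 0 0; rewrite addr0 => /eqP.
by rewrite -subr_eq subrr eq_sym => /eqP.
Qed.

Lemma Eid g : ideal Rmul (E g). Proof. exact: (ac_ideal Hact). Qed.

Lemma E0 g : E g 0. Proof. exact: (id_0 (Eid g)). Qed.

Lemma EN g x : E g x -> E g (- x).
Proof. by move=> H; rewrite -sub0r; apply: (id_sub (Eid g)) => //; apply: E0. Qed.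

Lemma ED g x y : E g x -> E g y -> E g (x + y).
Proof. by move=> Hx Hy; rewrite -[y]opprK; apply: (id_sub (Eid g)) => //; apply: EN. Qed.

Lemma Esum g (I : finType) (P : pred I) (F : I -> R) :
  (forall i, P i -> E g (F i)) -> E g (\sum_(i | P i) F i).
Proof.
move=> H; apply: (big_ind (E g)); [exact: E0 | exact: ED | exact: H].
Qed.

Lemma Er g : E g = E (r g). Proof. exact: (ac_Er Hact). Qed.

Lemma beta0 g : beta g 0 = 0.
Proof.
have := ac_add Hact (E0 (inv g)) (E0 (inv g)); rewrite addr0 => /eqP.
by rewrite -subr_eq subrr eq_sym => /eqP.
Qed.

Lemma beta_sum g (I : finType) (P : pred I) (F : I -> R) :
  (forall i, P i -> E (inv g) (F i)) ->
  beta g (\sum_(i | P i) F i) = \sum_(i | P i) beta g (F i).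
Proof.
move=> H.
suff [] : E (inv g) (\sum_(i | P i) F i) /\
   beta g (\sum_(i | P i) F i) = \sum_(i | P i) beta g (F i) by [].
apply: (big_rec2 (fun y1 y2 => E (inv g) y1 /\ beta g y1 = y2)).
  by split; [exact: E0 | exact: beta0].
move=> i y1 y2 Pi [Hy1 <-]; split; first by apply: ED => //; apply: H.
by rewrite (ac_add Hact) //; apply: H.
Qed.


Section Main.
Variables (e f l0 : G).
Hypotheses (He : d e = e) (Hf : d f = f) (Hl0r : r l0 = e) (Hl0d : d l0 = f).

Definition S := [set l : G | (r l == e) && (d l == f)].
Lemma l0S : l0 \in S. Proof. by rewrite inE Hl0r Hl0d !eqxx. Qed.
Lemma inS l : (l \in S) = (r l == e) && (d l == f). Proof. by rewrite inE. Qed.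

Definition L (i : 'I_#|S|) : G := enum_val i.
Lemma Lr i : r (L i) = e. Proof. by have := enum_valP i; rewrite inS => /andP[/eqP]. Qed.
Lemma Ld i : d (L i) = f. Proof. by have := enum_valP i; rewrite inS => /andP[_ /eqP]. Qed.

Definition gij i j := mul (L i) (inv (L j)).
Definition sig i := mul l0 (inv (L i)).

Lemma re : r e = e. Proof. by rewrite -{1}He (gd_rd HG). Qed.

Lemma gij_d i j : d (gij i j) = e. Proof. by rewrite dmul ?dinv ?Lr // rinv !Ld. Qed.
Lemma gij_r i j : r (gij i j) = e. Proof. by rewrite rmul ?Lr // rinv !Ld. Qed.
Lemma sig_d i : d (sig i) = e. Proof. by rewrite dmul ?dinv ?Lr // rinv Ld. Qed.
Lemma sig_r i : r (sig i) = e. Proof. by rewrite rmul // rinv Ld. Qed.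
Lemma E_isig i : E (inv (sig i)) = E e. Proof. by rewrite Er rinv sig_d. Qed.
Lemma E_gij i j : E (gij i j) = E e. Proof. by rewrite Er gij_r. Qed.
Lemma E_igij i j : E (inv (gij i j)) = E e. Proof. by rewrite Er rinv gij_d. Qed.
Lemma E_sig i : E (sig i) = E e. Proof. by rewrite Er sig_r. Qed.

Definition phi (x : {ffun G * G -> R}) : {ffun 'I_#|S| * 'I_#|S| -> R} :=
  [ffun p => beta (sig p.1) (x (gij p.1 p.2, L p.2))].

Lemma decode g l : d g = e -> r g = e -> r l = e -> d l = f ->
  exists i j, [/\ L j = l, L i = mul g l & gij i j = g].
Proof.
move=> Hdg Hrg Hrl Hdl.
have lS : l \in S by rewrite inS Hrl Hdl !eqxx.
have glS : mul g l \in S by rewrite inS rmul ?dmul ?Hrg ?Hdl ?Hrl ?Hdg ?eqxx.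
exists (enum_rank_in l0S (mul g l)), (enum_rank_in l0S l).
rewrite /gij /L !enum_rankK_in //; split=> //.
by rewrite canc3 // Hdg Hrl.
Qed.


Local Notation Bef := (inBef d r E e f).

Lemma bef_E x g l : Bef x -> r g = e -> E e (x (g, l)).
Proof. by move=> Hx Hr; case: (Hx g l); rewrite Er Hr. Qed.

Lemma bef_xgij x i j : Bef x -> E e (x (gij i j, L j)).
Proof. by move=> Hx; apply: bef_E => //; apply: gij_r. Qed.

Lemma phi_mat x : Bef x -> inMat (E e) (phi x).
Proof.
move=> Hx i j; rewrite ffunE /= -(E_sig i); apply: (ac_maps Hact).
by rewrite E_isig; apply: bef_xgij.
Qed.

Lemma phi_inj x y : Bef x -> Bef y -> phi x = phi y -> x = y.
Proof.
move=> Hx Hy Hxy; apply/ffunP => [[g l]].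
have key : [\/ x (g,l) <> 0 | y (g,l) <> 0] -> x (g,l) = y (g,l).
  move=> Hor.
  have [Hdg Hrg Hrl Hdl] : [/\ d g = e, r g = e, r l = e & d l = f].
    by case: Hor => H; [case: (Hx g l) => _; apply | case: (Hy g l) => _; apply].
  have [i [j [Hj Hi Hg]]] := @decode g l Hdg Hrg Hrl Hdl.
  move/ffunP: Hxy => /(_ (i,j)); rewrite !ffunE /= Hg Hj => H.
  by apply: (ac_inj Hact) H; rewrite E_isig; apply: bef_E.
case: (eqVneq (x (g,l)) 0) => Hx0; last by apply: key; left; apply/eqP.
case: (eqVneq (y (g,l)) 0) => Hy0; first by rewrite Hx0 Hy0.
by apply: key; right; apply/eqP.
Qed.

Lemma phi_surj A : inMat (E e) A -> exists2 x, Bef x & phi x = A.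
Proof.
move=> HA.
pose x : {ffun G * G -> R} := [ffun p : G * G =>
  if [&& d p.1 == e, r p.1 == e & p.2 \in S] then
    beta (inv (sig (enum_rank_in l0S (mul p.1 p.2))))
      (A (enum_rank_in l0S (mul p.1 p.2), enum_rank_in l0S p.2))
  else 0].
exists x.
  move=> g l; rewrite ffunE /=; case: ifP => [/and3P[/eqP Hd /eqP Hr lS] | _].
    split; last by move: lS; rewrite inS => /andP[/eqP ? /eqP ?].
    rewrite Er Hr -(E_isig (enum_rank_in l0S (mul g l))).
    by apply: (ac_maps Hact); rewrite Er rinv dinv sig_r.
  by split; [apply: E0 | ].
apply/ffunP => [[i j]]; rewrite !ffunE /=.
rewrite gij_d gij_r enum_valP !eqxx /=.
have -> : mul (gij i j) (L j) = L i by rewrite /gij canc2 // !Ld.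
rewrite /L !enum_valK_in.
rewrite (ac_comp Hact); last by rewrite Er rinv dinv sig_r.
  by rewrite (gd_invr HG) sig_r (ac_id Hact).
by rewrite rinv.
Qed.

Lemma phiD x y : Bef x -> Bef y -> phi (x + y) = phi x + phi y.
Proof.
move=> Hx Hy; apply/ffunP => [[i j]]; rewrite !ffunE /=.
by rewrite (ac_add Hact) // E_isig; apply: bef_xgij.
Qed.

Lemma phiZ (c : K) x : Bef x -> phi (c *: x) = c *: phi x.
Proof.
move=> Hx; apply/ffunP => [[i j]]; rewrite !ffunE /=.
by rewrite (ac_scale Hact) // E_isig; apply: bef_xgij.
Qed.


Lemma bmul_bef x y : Bef x -> Bef y -> Bef (Bmul Rmul d r inv mul beta x y).
Proof.
move=> Hx Hy g0 l; rewrite ffunE /=; split.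
  apply: Esum => g _; apply: Esum => h _; apply: Esum => k _.
  case: ifP => [/and4P[_ _ /eqP Hgh /eqP Hm] | _]; last exact: E0.
  rewrite -Hm Er rmul // -Er; apply: (id_mulr (Eid g)).
  by case: (Hx g k).
move=> Hnz.
case: (boolP [exists g, exists h, exists k, [&& d k == d l, h == mul k (inv l),
    d g == r h, mul g h == g0 & (x (g,k) != 0) && (y (h,l) != 0)]]).
  move=> /existsP[g /existsP[h /existsP[k /and5P[_ _ /eqP Hgh /eqP Hm /andP[/eqP Hxn /eqP Hyn]]]]].
  have [Hdg Hrg _ _] := proj2 (Hx g k) Hxn.
  have [Hdh Hrh Hrl Hdl] := proj2 (Hy h l) Hyn.
  by rewrite -Hm dmul // rmul.
move=> Hn; exfalso; apply: Hnz.
apply: big1 => g _; apply: big1 => h _; apply: big1 => k _.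
case: ifP => // Hc.
case: (eqVneq (x (g,k)) 0) => [->|Hxk]; first by rewrite Rmul0l.
case: (eqVneq (y (h,l)) 0) => [->|Hyh]; first by rewrite beta0 Rmul0r.
exfalso; move/negP: Hn; apply; apply/existsP; exists g; apply/existsP; exists h.
apply/existsP; exists k.
by move/and4P: Hc => [-> -> -> ->]; rewrite Hxk Hyh.
Qed.

Lemma bone_bef : Bef (Bone d r one e f).
Proof.
move=> g l; rewrite ffunE /=; case: ifP => [/and3P[/eqP -> /eqP Hr /eqP Hd] | _].
  by split; [apply: (ac_one_in Hact) | rewrite re].
by split; [apply: E0 | ].
Qed.

Lemma beta_one s : d s = e -> r s = e -> beta s (one e) = one e.
Proof.
move=> Hd Hr.
have Hinv : E (inv s) = E e by rewrite Er rinv Hd.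
have Hs : E s = E e by rewrite Er Hr.
have H1 : E e (one e) := ac_one_in Hact He.
have Hb : E e (beta s (one e)) by rewrite -Hs; apply: (ac_maps Hact); rewrite Hinv.
have H1s : E s (one e) by rewrite Hs.
have [z Hz Hbz] := ac_surj Hact H1s.
rewrite -[LHS](ac_one_r Hact He Hb) -{2}Hbz -(ac_mul Hact) ?Hinv //.
rewrite (ac_one_l Hact He) //.
all: by rewrite -?Hinv.
Qed.

Lemma phi_one : phi (Bone d r one e f) = Mone #|S| (one e).
Proof.
apply/ffunP => [[i j]]; rewrite !ffunE /= Lr Ld !eqxx !andbT.
case: (eqVneq i j) => [<-|Hij].
  by rewrite /gij (gd_invr HG) Lr eqxx beta_one ?sig_d ?sig_r.
suff -> : (gij i j == e) = false by rewrite beta0.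
apply/negbTE/eqP => H; move/eqP: Hij; apply.
have : mul (gij i j) (L j) = L i by rewrite /gij canc2 // !Ld.
rewrite H -(Lr j) (gd_lid HG) /L => /(congr1 (enum_rank_in l0S)).
by rewrite !enum_valK_in.
Qed.


Lemma phiM x y : Bef x -> Bef y ->
  phi (Bmul Rmul d r inv mul beta x y) = Mmul Rmul (phi x) (phi y).
Proof.
move=> Hx Hy; apply/ffunP => [[i j]]; rewrite !ffunE /=.
pose F k := Rmul (x (mul (L i) (inv k), k))
                 (beta (mul (L i) (inv k)) (y (mul k (inv (L j)), L j))).
have Hsum : \sum_(g : G) \sum_(h : G) \sum_(k : G)
       (if [&& d k == d (L j), h == mul k (inv (L j)), d g == r h & mul g h == gij i j]
        then Rmul (x (g, k)) (beta g (y (h, L j))) else 0)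
     = \sum_(m < #|S|) F (L m).
  transitivity (\sum_(k in S) F k); last by rewrite big_enum_val.
  under eq_bigr => g _ do rewrite exchange_big.
  rewrite exchange_big [RHS]big_mkcond; apply: eq_bigr => k _.
  set h0 := mul k (inv (L j)).
  rewrite (eq_bigr (fun g => if [&& d k == d (L j), true, d g == r h0 & mul g h0 == gij i j]
      then Rmul (x (g,k)) (beta g (y (h0, L j))) else 0)); last first.
    move=> g _; rewrite (bigD1 h0) //= eqxx big1 ?addr0 // => h /negbTE Hh.
    by rewrite Hh andbF.
  case: (boolP (k \in S)) => kS.
    have /andP[/eqP Hrk /eqP Hdk] : (r k == e) && (d k == f) by rewrite -inS.
    set g0 := mul (L i) (inv k).
    have Hg0 : d g0 = e by rewrite dmul ?dinv // rinv Ld.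
    have Hh0 : r h0 = e by rewrite rmul // rinv Ld.
    have Hm0 : mul g0 h0 = gij i j.
      by rewrite /g0 /h0 canc1 ?rinv ?Ld ?Hdk.
    rewrite (bigD1 g0) //= Hdk Ld Hg0 Hh0 Hm0 !eqxx /= big1 ?addr0 //.
    move=> g /negbTE Hg; case: ifP => // /andP[/eqP H1 /eqP H2].
    suff Hgg : g = g0 by move: Hg; rewrite Hgg eqxx.
    by apply: (@rcanc _ _ h0); rewrite ?H1 ?Hg0 ?Hh0 ?H2 ?Hm0.
  apply: big1 => g _; case: ifP => // _.
  case: (eqVneq (x (g,k)) 0) => [->|Hn]; first by rewrite Rmul0l.
  have [_ _ Hrk Hdk] := proj2 (Hx g k) (elimN eqP Hn).
  by move: kS; rewrite inS Hrk Hdk !eqxx.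
rewrite Hsum beta_sum; last first.
  move=> m _; rewrite E_isig; apply: (id_mulr (Eid e)).
  exact: (@bef_xgij x i m Hx).
apply: eq_bigr => m _; rewrite !ffunE /=.
have Hy' : E e (y (gij m j, L j)) by apply: bef_xgij.
have Hb : E e (beta (gij i m) (y (gij m j, L j))).
  by rewrite -(E_gij i m); apply: (ac_maps Hact); rewrite E_igij.
rewrite /F (ac_mul Hact) ?E_isig //; last exact: (@bef_xgij x i m Hx).
rewrite (ac_comp Hact) ?sig_d ?gij_r ?E_igij //.
by rewrite /sig /gij canc1 // ?rinv !Ld.
Qed.


Lemma main_concl :
  exists phi0 : {ffun G * G -> R} -> {ffun 'I_(nef d r e f) * 'I_(nef d r e f) -> R},
    and
      (forall x y, inBef d r E e f x -> inBef d r E e f y ->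
         inBef d r E e f (Bmul Rmul d r inv mul beta x y))
      (inBef d r E e f (Bone d r one e f)) /\
    and
      [/\ forall x, inBef d r E e f x -> inMat (E e) (phi0 x),
           forall x y, inBef d r E e f x -> inBef d r E e f y -> phi0 x = phi0 y -> x = y
         & forall A, inMat (E e) A -> exists2 x, inBef d r E e f x & phi0 x = A]
      [/\ forall x y, inBef d r E e f x -> inBef d r E e f y -> phi0 (x + y) = phi0 x + phi0 y,
          forall (c : K) x, inBef d r E e f x -> phi0 (c *: x) = c *: phi0 x,
          forall x y, inBef d r E e f x -> inBef d r E e f y ->
            phi0 (Bmul Rmul d r inv mul beta x y) = Mmul Rmul (phi0 x) (phi0 y)
        & phi0 (Bone d r one e f) = Mone (nef d r e f) (one e)].
Proof.
exists phi; split; first split.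
- exact: bmul_bef.
- exact: bone_bef.
split; split.
- exact: phi_mat.
- exact: phi_inj.
- exact: phi_surj.
- exact: phiD.
- exact: phiZ.
- exact: phiM.
- exact: phi_one.
Qed.

End Main.
End Prop36.

Theorem proposition3p6
  (K : comPzRingType) (R : lmodType K) (Rmul : R -> R -> R)
  (G : finType) (d r inv : G -> G) (mul : G -> G -> G)
  (E : G -> R -> Prop) (beta : G -> R -> R) (one : G -> R)
  (HR : kalgebra Rmul) (HG : groupoid d r inv mul)
  (Hact : action Rmul d r inv mul E beta one)
  (e f : G) (He : is_unit_obj d e) (Hf : is_unit_obj d f)
  (Hne : exists l : G, r l = e /\ d l = f) :
  exists phi : {ffun G * G -> R} -> {ffun 'I_(nef d r e f) * 'I_(nef d r e f) -> R},
    and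
      (forall x y, inBef d r E e f x -> inBef d r E e f y ->
         inBef d r E e f (Bmul Rmul d r inv mul beta x y))
      (inBef d r E e f (Bone d r one e f)) /\
    and
      [/\ forall x, inBef d r E e f x -> inMat (E e) (phi x),
           forall x y, inBef d r E e f x -> inBef d r E e f y -> phi x = phi y -> x = y
         & forall A, inMat (E e) A -> exists2 x, inBef d r E e f x & phi x = A]
      [/\ forall x y, inBef d r E e f x -> inBef d r E e f y -> phi (x + y) = phi x + phi y,
          forall (c : K) x, inBef d r E e f x -> phi (c *: x) = c *: phi x,
          forall x y, inBef d r E e f x -> inBef d r E e f y ->
            phi (Bmul Rmul d r inv mul beta x y) = Mmul Rmul (phi x) (phi y)
        & phi (Bone d r one e f) = Mone (nef d r e f) (one e)].
Proof.
case: Hne => l0 [H1 H2].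
exact (main_concl _ _ _ _ _ _ _ _ _ _ _ HR HG Hact _ _ _ He H1 H2).
Qed.
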